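(* Consider the recursive network formation model with the utility function described in the context. If $$c<b_1-b_2 \quad\text{and}\quad c_0\le(1-\gamma)b_2,$$ then the resulting topology is a complete graph: starting from a single node, for every $n\ge1$, the pairwise stable network reached after the $n$-th node has entered is the complete graph on $n$ nodes, irrespective of the random order in which nodes are selected to move.
   Context: Networks are finite simple undirected graphs whose vertices (nodes) are self-interested agents. Parameters: benefits $b_1>b_2>b_3>b_4>\dots>0$, where $b_i$ is the benefit a node obtains from a node at distance $i$; a link cost $c$ per immediate neighbor; an intermediation fraction $\gamma$ with $0\le\gamma<1$; and a network entry factor $c_0$. Notation: $N$ is the set of nodes currently in the network, $d_j$ the degree of $j$, and $l(j,w)$ the graph distance. A node $x$ is essential for a pair $y,z$ (with $x\notin\{y,z\}$) if $x$ lies on every path joining $y$ and $z$. Write $E(y,z)$ for the set of nodes essential for $y,z$ and $e(y,z)=|E(y,z)|$. Only pairs joined by a path contribute to the sums below. Utility of node $j$ in network $g$: $$u_j(g)=-c_0\,d_{T(j)}\mathbf 1_{\{j=\mathrm{NE}\}}+d_j(b_1-c)+\sum_{w\in N,\ l(j,w)>1}b_{l(j,w)}-\sum_{w\in N,\ E(j,w)\ne\emptyset}\gamma\, b_{l(j,w)}+\sum_{y,z\in N,\ j\in E(y,z)}\frac{\gamma}{e(y,z)}\,2\,b_{l(y,z)}.$$ Here $\mathbf 1_{\{j=\mathrm{NE}\}}=1$ exactly when $j$ is a newly entering node evaluating the creation of its first link. $T(j)$ is the existing node to which $j$ forms that first link, and $d_{T(j)}$ is that node's degree before the link. The network before entry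 gives the entering node utility $0$. Pairwise stability: $g$ is pairwise stable if (a) for every link $(i,j)\in g$, $u_i(g\setminus\{(i,j)\})\le u_i(g)$ and $u_j(g\setminus\{(i,j)\})\le u_j(g)$; and (b) for every non-link $(i,j)\notin g$, if $u_i(g\cup\{(i,j)\})>u_i(g)$ then $u_j(g\cup\{(i,j)\})<u_j(g)$. Recursive model of network formation: - The process starts with a single node. - When the current network of $n-1$ nodes is pairwise stable, a new node considers entering. Its options are to stay out or to propose a link to one existing node. The link forms iff the receiving node's utility does not decrease. No existing node can link to the newcomer before it has formed this first link. - After entry, nodes are repeatedly chosen at random to move. A chosen node plays a myopic best response among three options: create a link with a non-neighbor (the link forms only if the other node's utility does not decrease, which the proposer anticipates); delete a link with a neighbor (unilaterally); or keep the status quo. It alters a link only if this strictly increases its current utility. - This continues until the network is pairwise stable; then the next node considers entering, and so on. ''The resulting topology is X'' means: for every number $n$ of nodes, every pairwise stable network reached after the $n$-th node has entered is a network of topology X on $n$ nodes, irrespective of the random choices. *)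

(* Defs.v *)
From HB Require Import structures.
From mathcomp Require Import all_boot all_order all_algebra.
Set Implicit Arguments. Unset Strict Implicit. Unset Printing Implicit Defensive.
Import Order.TTheory GRing.Theory Num.Theory.
Local Open Scope ring_scope.

Section Network.
Variable R : realFieldType.
(* b i = benefit from a node at distance i (i >= 1; b 0 is unused) *)
Variables (b : nat -> R) (c gamma c0 : R).

Section Graph.
Variable n : nat.
Implicit Types (g : rel 'I_n) (x y z j w : 'I_n).

Definition addE g (i k : 'I_n) : rel 'I_n :=
  [rel x y | g x y || ((x == i) && (y == k)) || ((x == k) && (y == i))].
Definition delE g (i k : 'I_n) : rel 'I_n :=
  [rel x y | g x y && ~~ (((x == i) && (y == k)) || ((x == k) && (y == i)))].

Definition deg g j : nat := #|[set w | g j w]|.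

Definition walk g x y (k : nat) : bool :=
  [exists p : k.-tuple 'I_n, path g x p && (last x p == y)].

(* graph distance l(x,y): length of a shortest path; only used when
   [connect g x y] holds (then the shortest path has < n links) *)
Definition dist g x y : nat := find (walk g x y) (iota 0 n).

(* x is essential for y,z: x differs from y,z and lies on every path
   joining y and z, i.e. there is no y-z path avoiding x *)
Definition essential g x y z : bool :=
  [&& x != y, x != z &
      ~~ connect [rel a e | [&& a != x, e != x & g a e]] y z].

Definition Ess g y z : {set 'I_n} := [set x | essential g x y z].

(* utility of node j in network g (without the entry-cost term, which only
   applies to a newcomer evaluating its first link, see [entrant_val]) *)
Definition util g j : R :=
  (deg g j)%:R * (b 1%N - c)
  + \sum_(w : 'I_n | connect g j w && (1 < dist g j w)%N) b (dist g j w)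
  - \sum_(w : 'I_n | connect g j w && (Ess g j w != set0)) gamma * b (dist g j w)
  + \sum_(y : 'I_n) \sum_(z : 'I_n | [&& (y < z)%N, connect g y z & j \in Ess g y z])
        (gamma / (#|Ess g y z|)%:R) * 2 * b (dist g y z).

Definition pairwise_stable g : Prop :=
  (forall i k, g i k -> util (delE g i k) i <= util g i /\ util (delE g i k) k <= util g k)
  /\ (forall i k, i != k -> ~~ g i k ->
        util g i < util (addE g i k) i -> util (addE g i k) k < util g k).

(* the options of node i in g that actually change the network:
   creating a link with a non-neighbour k who does not lose from it,
   or unilaterally deleting a link *)
Definition option_of g (i : 'I_n) (h : rel 'I_n) : Prop :=
  (exists k, [/\ k != i, ~~ g i k, util g k <= util (addE g i k) k & h = addE g i k])
  \/ (exists k, g i k /\ h = delE g i k).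

Definition move g (h : rel 'I_n) : Prop :=
  exists i, [/\ option_of g i h, util g i < util h i &
                forall h', option_of g i h' -> util h' i <= util h i].

Inductive run : rel 'I_n -> rel 'I_n -> Prop :=
| run_stop g : pairwise_stable g -> run g g
| run_move g h g' : ~ pairwise_stable g -> move g h -> run h g' -> run g g'.

End Graph.

(* embedding the network on n nodes into 'I_n.+1, the newcomer being
   [ord_max] (isolated) *)
Definition ext n (g : rel 'I_n) : rel 'I_n.+1 :=
  fun x y => match unlift ord_max x, unlift ord_max y with
             | Some x', Some y' => g x' y'
             | _, _ => false
             end.

Definition entered n (g : rel 'I_n) (T : 'I_n) : rel 'I_n.+1 :=
  addE (ext g) ord_max (widen_ord (leqnSn n) T).

Definition entrant_val n (g : rel 'I_n) (T : 'I_n) : R :=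
  util (entered g T) ord_max - c0 * (deg g T)%:R.

Definition accepts n (g : rel 'I_n) (T : 'I_n) : Prop :=
  util g T <= util (entered g T) (widen_ord (leqnSn n) T).

(* the newcomer enters by linking to T: T accepts, the newcomer's choice is
   a best response among accepted links, and strictly better than staying
   out (utility 0) *)
Definition entry_ok n (g : rel 'I_n) (T : 'I_n) : Prop :=
  [/\ accepts g T, 0 < entrant_val g T &
      forall T', accepts g T' -> entrant_val g T' <= entrant_val g T].

(* reached n g : g is a pairwise stable network reached after the n-th node
   has entered, for some realisation of the random choices *)
Inductive reached : forall n, rel 'I_n -> Prop :=
| reached1 : reached [rel x y : 'I_1 | false]
| reachedS n (g : rel 'I_n) (T : 'I_n) (h : rel 'I_n.+1) :
    reached g -> entry_ok g T -> run (entered g T) h -> reached h.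

End Network.

(* Main.v *)
Require Import Defs.
From HB Require Import structures.
From mathcomp Require Import all_boot all_order all_algebra.
From mathcomp Require Import zify ring lra.
From Stdlib Require Import FunctionalExtensionality.
Import Order.TTheory GRing.Theory Num.Theory.
Set Implicit Arguments. Unset Strict Implicit. Unset Printing Implicit Defensive.

Lemma walk0 n (G : rel 'I_n) x y : walk G x y 0 = (x == y).
Proof.
apply/existsP/idP => [[p /andP[_ /eqP <-]]|/eqP <-].
  by rewrite (tuple0 p).
by exists [tuple]; rewrite /= eqxx.
Qed.

Lemma walk1 n (G : rel 'I_n) x y : walk G x y 1 = G x y.
Proof.
apply/existsP/idP => [[p]|Gxy].
  case: p => [[|z [|? ?]] //= Hs]; by rewrite andbT => /andP[? /eqP <-].
by exists [tuple y]; rewrite /= Gxy eqxx.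
Qed.

Lemma walk_sub n (G H : rel 'I_n) x y k :
  (forall a e, H a e -> G a e) -> walk H x y k -> walk G x y k.
Proof.
move=> sub /existsP[p /andP[hp hl]]; apply/existsP; exists p.
by rewrite hl andbT; apply: sub_path hp => a e /sub.
Qed.

Lemma dist_le n (G : rel 'I_n) x y j : (j < n)%N -> walk G x y j -> (dist G x y <= j)%N.
Proof.
move=> jn hw; rewrite leqNgt; apply/negP => lt.
have := before_find 0%N lt; rewrite nth_iota // add0n hw //.
Qed.

Lemma dist_size n (G : rel 'I_n) x y : (dist G x y <= n)%N.
Proof. by have := find_size (walk G x y) (iota 0 n); rewrite size_iota. Qed.

Lemma dist_walk n (G : rel 'I_n) x y : (dist G x y < n)%N -> walk G x y (dist G x y).
Proof.
move=> lt; have hs : has (walk G x y) (iota 0 n) by rewrite has_find size_iota.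
by have := nth_find 0%N hs; rewrite nth_iota ?add0n // -(size_iota 0 n) -has_find.
Qed.

Lemma ord_small n (x y : 'I_n) : (n <= 1)%N -> x = y.
Proof. move=> h; apply: ord_inj; have := ltn_ord x; have := ltn_ord y; lia. Qed.

Lemma dist_pos n (G : rel 'I_n) x y : x != y -> (0 < dist G x y)%N.
Proof.
move=> nxy; rewrite lt0n; apply/eqP => d0.
have n0 : (0 < n)%N by have := ltn_ord x; lia.
by have := dist_walk (G := G) (x:=x) (y:=y); rewrite d0 walk0 (negbTE nxy) => /(_ n0).
Qed.

Lemma ess_dist n (G : rel 'I_n) y z : Ess G y z != set0 -> (1 < dist G y z)%N.
Proof.
case/set0Pn => x; rewrite inE => /and3P[xy xz nc].
rewrite ltnNge; apply/negP => d1.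
case: (ltnP (dist G y z) n) => dn.
  have := dist_walk dn; move: d1; rewrite leq_eqVlt ltnS leqn0.
  case/orP => /eqP ->.
    rewrite walk1 => Gyz; move/negP: nc; apply; apply: connect1 => /=.
    by rewrite Gyz eq_sym xy eq_sym xz.
  by rewrite walk0 => /eqP yz; move/negP: nc; apply; rewrite yz connect0.
have yz : y = z by apply: ord_small; lia.
by move/negP: nc; apply; rewrite yz connect0.
Qed.

Local Open Scope ring_scope.

Definition FF (R : realFieldType) (b : nat -> R) (gamma : R) n (G : rel 'I_n) j w : R :=
  (if connect G j w && (1 < dist G j w)%N then b (dist G j w) else 0)
  - (if connect G j w && (Ess G j w != set0) then gamma * b (dist G j w) else 0).

Definition Inc (R : realFieldType) (b : nat -> R) (gamma : R) n (G : rel 'I_n) j : R :=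
  \sum_(y : 'I_n) \sum_(z : 'I_n | [&& (y < z)%N, connect G y z & j \in Ess G y z])
        (gamma / (#|Ess G y z|)%:R) * 2 * b (dist G y z).

Lemma util_split (R : realFieldType) (b : nat -> R) c gamma n (G : rel 'I_n) j :
  util b c gamma G j = (deg G j)%:R * (b 1%N - c) + \sum_w FF b gamma G j w + Inc b gamma G j.
Proof.
rewrite /util /Inc /FF; congr (_ + _).
rewrite -addrA; congr (_ + _).
rewrite sumrB; congr (_ - _); exact: big_mkcond.
Qed.

Lemma b_mono (R : realFieldType) (b : nat -> R)
  (hb_dec : forall i : nat, (0 < i)%N -> b i.+1 < b i) p q :
  (0 < p)%N -> (p <= q)%N -> b q <= b p.
Proof.
move=> p0; elim: q => [|q IH]; first by rewrite leqn0 => /eqP p0'; rewrite p0' in p0.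
rewrite leq_eqVlt => /orP[/eqP ->//|]; rewrite ltnS => pq.
apply: le_trans (IH pq); apply: ltW; apply: hb_dec; exact: leq_trans pq.
Qed.

Section Del.
End Del.

Lemma FF_ge0 (R : realFieldType) (b : nat -> R) gamma
  (hb_pos : forall i : nat, (0 < i)%N -> 0 < b i) (hg1 : gamma < 1) n (G : rel 'I_n) j w :
  0 <= FF b gamma G j w.
Proof.
rewrite /FF; case: (boolP (Ess G j w != set0)) => e.
  have d1 := ess_dist e.
  rewrite d1 !andbT; case: (connect _ _ _); last by rewrite subrr.
  have bp := hb_pos _ (ltnW d1).
  rewrite subr_ge0 ler_piMl // ltW //.
rewrite andbF subr0; case: ifP => // /andP[_ d]; apply: ltW; apply: hb_pos; exact: ltnW.
Qed.

Lemma del_sub n (g : rel 'I_n) i k a e : delE g i k a e -> g a e.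
Proof. by rewrite /delE /= => /andP[]. Qed.

Lemma del_keep n (g : rel 'I_n) i k w : w != k -> g i w -> delE g i k i w.
Proof.
move=> wk giw; rewrite /delE /= giw eqxx (negbTE wk) /=.
by apply/negP => /andP[/eqP ik /eqP wi]; move/negP: wk; apply; rewrite wi ik.
Qed.

Lemma del_avoid n (g : rel 'I_n) i k a e :
  [&& a != i, e != i & delE g i k a e] = [&& a != i, e != i & g a e].
Proof.
rewrite /delE /=; case: (boolP (a != i)) => //= ai; case: (boolP (e != i)) => //= ei.
by rewrite (negbTE ai) (negbTE ei) andbF /= andbT.
Qed.

Lemma conn_del n (g : rel 'I_n) i k x y : connect (delE g i k) x y -> connect g x y.
Proof. apply: connect_sub => a e /del_sub ge; exact: connect1. Qed.

Lemma dist_del n (g : rel 'I_n) i k x y : (dist g x y <= dist (delE g i k) x y)%N.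
Proof.
case: (ltnP (dist (delE g i k) x y) n) => dn; last exact: leq_trans (dist_size _ _ _) dn.
apply: dist_le => //; apply: walk_sub (dist_walk dn) => a e; exact: del_sub.
Qed.

Lemma ess_del n (g : rel 'I_n) i k y z : Ess g y z \subset Ess (delE g i k) y z.
Proof.
apply/subsetP => x; rewrite !inE /essential => /and3P[-> -> nc] /=; apply: contra nc.
by apply: connect_sub => a e /= /and3P[ax ex /del_sub ge]; apply: connect1; rewrite /= ax ex ge.
Qed.

Lemma ess_del_i n (g : rel 'I_n) i k y z : (i \in Ess (delE g i k) y z) = (i \in Ess g y z).
Proof.
rewrite !inE /essential; congr [&& _, _ & ~~ _].
by apply: eq_connect => a e /=; rewrite del_avoid.
Qed.

Lemma dist_del_small n (g : rel 'I_n) i k w : w != k ->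
  (dist g i w <= 1)%N -> (dist (delE g i k) i w <= 1)%N.
Proof.
move=> wk d1; case: (ltnP (dist g i w) n) => dn; last first.
  by move/negP: wk; case; apply/eqP; apply: ord_small; lia.
have := dist_walk dn; move: d1; rewrite leq_eqVlt ltnS leqn0 => /orP[]/eqP e; rewrite e.
  rewrite walk1 => giw; apply: dist_le; first by rewrite -e.
  by rewrite walk1; apply: del_keep.
rewrite walk0 => /eqP iw; apply: leq_trans (_ : 0 <= 1)%N => //.
by apply: dist_le; [rewrite -e | rewrite walk0 iw].
Qed.

Lemma FF_del_ne (R : realFieldType) (b : nat -> R) gamma
  (hb_pos : forall i : nat, (0 < i)%N -> 0 < b i)
  (hb_dec : forall i : nat, (0 < i)%N -> b i.+1 < b i)
  (hg0 : 0 <= gamma) (hg1 : gamma < 1) n (g : rel 'I_n) i k w :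
  w != k -> FF b gamma (delE g i k) i w <= FF b gamma g i w.
Proof.
move=> wk.
case: (boolP (connect (delE g i k) i w && (1 < dist (delE g i k) i w)%N)) => hc; last first.
  rewrite /FF (negbTE hc) sub0r.
  case: (boolP (Ess (delE g i k) i w != set0)) => e; last first.
    by rewrite andbF oppr0; exact: FF_ge0.
  by move: hc; rewrite (ess_dist e) andbT => /negbTE ->; rewrite oppr0; exact: FF_ge0.
move/andP: hc => [cH dH].
have cG := conn_del cH.
have dG : (1 < dist g i w)%N.
  rewrite ltnNge; apply/negP => /(@dist_del_small _ g i k w wk); rewrite leqNgt dH //.
have dGH := dist_del g i k i w.
have ble : b (dist (delE g i k) i w) <= b (dist g i w) by apply: b_mono => //; exact: ltnW.
have bp : 0 < b (dist (delE g i k) i w) by apply: hb_pos; exact: ltn_trans dH.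
rewrite /FF cH cG dH dG /=.
case: (boolP (Ess g i w != set0)) => eG.
  have eH : Ess (delE g i k) i w != set0.
    apply: contra eG => /eqP e0; apply/eqP/eqP; rewrite -subset0 -e0; exact: ess_del.
  rewrite eH -[X in X - _]mul1r -[X in _ <= X - _]mul1r -!mulrBl.
  by apply: ler_wpM2l => //; rewrite subr_ge0 ltW.
rewrite subr0; case: (Ess _ _ _ != set0); last by rewrite subr0.
rewrite lerBlDr; apply: le_trans ble _; rewrite lerDl mulr_ge0 // ltW //.
Qed.

Lemma FF_del_k (R : realFieldType) (b : nat -> R) gamma
  (hb_pos : forall i : nat, (0 < i)%N -> 0 < b i)
  (hb_dec : forall i : nat, (0 < i)%N -> b i.+1 < b i)
  (hg0 : 0 <= gamma) (hg1 : gamma < 1) n (g : rel 'I_n) i k :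
  FF b gamma (delE g i k) i k <= b 2%N + FF b gamma g i k.
Proof.
apply: le_trans (_ : b 2%N <= _); last by rewrite lerDl; exact: FF_ge0.
rewrite /FF; case: ifP => [/andP[_ d]|_].
  apply: le_trans (_ : b (dist (delE g i k) i k) <= _); last exact: b_mono.
  rewrite lerBlDr lerDl; case: ifP => // _; rewrite mulr_ge0 // ltW // hb_pos //; exact: ltnW.
rewrite sub0r; apply: le_trans (ltW (hb_pos 2%N isT)); rewrite oppr_le0.
case: ifP => [/andP[_ e]|_] //; rewrite mulr_ge0 // ltW // hb_pos //.
exact: ltnW (ess_dist e).
Qed.

Lemma Inc_del (R : realFieldType) (b : nat -> R) gamma
  (hb_pos : forall i : nat, (0 < i)%N -> 0 < b i)
  (hb_dec : forall i : nat, (0 < i)%N -> b i.+1 < b i)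
  (hg0 : 0 <= gamma) n (g : rel 'I_n) i k :
  Inc b gamma (delE g i k) i <= Inc b gamma g i.
Proof.
apply: ler_sum => y _; rewrite [X in X <= _]big_mkcond [X in _ <= X]big_mkcond /=.
apply: ler_sum => z _.
have gpos : forall (G : rel 'I_n), (y < z)%N -> i \in Ess G y z ->
    0 <= gamma / (#|Ess G y z|)%:R * 2 * b (dist G y z).
  move=> G yz _; rewrite !mulr_ge0 // ?invr_ge0 ?ler0n // ltW // hb_pos // dist_pos //.
  by rewrite neq_ltn yz.
case: ifP => [/and3P[yz cH eH]|_]; last first.
  by case: ifP => // /and3P[yz _ e]; apply: gpos.
have eG : i \in Ess g y z by rewrite -(ess_del_i g i k).
rewrite yz (conn_del cH) eG /=.
have yz' : y != z by rewrite neq_ltn yz.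
have dG := dist_pos g yz'.
have cardG : (0 < #|Ess g y z|)%N by apply/card_gt0P; exists i.
have cardle : (#|Ess g y z| <= #|Ess (delE g i k) y z|)%N by apply: subset_leq_card; exact: ess_del.
apply: ler_pM.
- by rewrite !mulr_ge0 // invr_ge0 ler0n.
- by apply: ltW; apply: hb_pos; exact: leq_trans dG (dist_del _ _ _ _ _).
- apply: ler_wpM2r => //; apply: ler_wpM2l => //.
  rewrite lef_pV2 ?posrE ?ltr0n ?ler_nat //; exact: leq_trans cardle.
- by apply: b_mono => //; exact: dist_del.
Qed.

Lemma deg_del n (g : rel 'I_n) i k : g i k -> deg g i = (deg (delE g i k) i).+1.
Proof.
move=> gik; rewrite /deg.
have -> : [set w | g i w] = k |: [set w | delE g i k i w].
  apply/setP => w; rewrite !inE.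
  case: eqP => [->|/eqP wk] /=; first by rewrite gik.
  case giw: (g i w); last by rewrite /delE /= giw.
  by rewrite (del_keep wk giw).
have hk : delE g i k i k = false by rewrite /delE /= !eqxx andbF.
by rewrite cardsU1 inE hk add1n.
Qed.

Lemma util_del (R : realFieldType) (b : nat -> R) c gamma
  (hb_pos : forall i : nat, (0 < i)%N -> 0 < b i)
  (hb_dec : forall i : nat, (0 < i)%N -> b i.+1 < b i)
  (hg0 : 0 <= gamma) (hg1 : gamma < 1) (hc : c < b 1%N - b 2%N)
  n (g : rel 'I_n) i k : g i k ->
  util b c gamma (delE g i k) i < util b c gamma g i.
Proof.
move=> gik; rewrite !util_split (deg_del gik).
have hd : ((deg (delE g i k) i).+1)%:R = (deg (delE g i k) i)%:R + 1 :> R by rewrite -addn1 natrD.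
rewrite hd mulrDl mul1r.
have hF : \sum_w FF b gamma (delE g i k) i w <= b 2%N + \sum_w FF b gamma g i w.
  rewrite (bigD1 k) //= [X in _ <= _ + X](bigD1 k) //= addrA.
  apply: lerD; first exact: FF_del_k.
  apply: ler_sum => w wk; exact: FF_del_ne.
have hI := Inc_del hb_pos hb_dec hg0 g i k.
set D := (deg _ _)%:R * _ in hF hI *.
set F1 := \sum_w _ in hF *. set F2 := \sum_w FF b gamma g i w in hF *.
set I1 := Inc _ _ _ _ in hI *. set I2 := Inc _ _ g i in hI *.
have : b 2%N < b 1%N - c by rewrite ltrBrDl -ltrBrDr.
move=> h2; lra.
Qed.

Definition famS n (S : pred 'I_n.+1) (h : rel 'I_n.+1) :=
  forall x y, h x y = (x != y) && ((x != ord_max) && (y != ord_max)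
                     || (x == ord_max) && S y || (y == ord_max) && S x).

Lemma fam_add n S (g : rel 'I_n.+1) i k : famS S g -> k != i -> ~~ g i k ->
  famS [pred y | S y || (y == i) || (y == k)] (addE g i k).
Proof.
move=> fg ki ngik x y; rewrite /addE /= fg.
move: ngik; rewrite fg eq_sym ki /= => ngik.
case: (eqVneq x y) => [<-|xy] /=.
  by case: (eqVneq x i) => [->|]; rewrite ?andbF //= (eq_sym i k) (negbTE ki) ?andbF.
have key : forall a, a != ord_max -> a != i -> a != k -> (a == ord_max) = false /\ (a == i) = false /\ (a == k) = false.
  by move=> a /negbTE -> /negbTE -> /negbTE ->.
case: (eqVneq i ord_max) => [ie|im]; case: (eqVneq k ord_max) => [ke|km].
- by move: ki; rewrite ie ke eqxx.
- subst i; move: ngik; rewrite eqxx (negbTE km) /= orbF => /negbTE Sk.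
  case: (eqVneq x ord_max) => [xe|xm]; case: (eqVneq y ord_max) => [ye|ym] /=.
  + by move: xy; rewrite xe ye eqxx.
  + subst x; case: (eqVneq y k) => [->|]; by rewrite ?andbF ?andbT ?orbF ?orbT ?orTb ?andTb ?andFb ?orFb.
  + subst y; case: (eqVneq x k) => [->|]; by rewrite ?andbF ?andbT ?orbF ?orbT ?orTb ?andTb ?andFb ?orFb.
  + by [].
- subst k; move: ngik; rewrite eqxx (negbTE im) /= => /negbTE Si.
  case: (eqVneq x ord_max) => [xe|xm]; case: (eqVneq y ord_max) => [ye|ym] /=.
  + by move: xy; rewrite xe ye eqxx.
  + subst x; case: (eqVneq y i) => [->|]; by rewrite ?andbF ?andbT ?orbF ?orbT ?orTb ?andTb ?andFb ?orFb.
  + subst y; case: (eqVneq x i) => [->|]; by rewrite ?andbF ?andbT ?orbF ?orbT ?orTb ?andTb ?andFb ?orFb.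
  + by [].
- by move: ngik; rewrite im km.
Qed.

Lemma fam_entered n (g : rel 'I_n) T : (forall x y, g x y = (x != y)) ->
  famS (pred1 (widen_ord (leqnSn n) T)) (entered g T).
Proof.
move=> gc x y; rewrite /entered /addE /ext /=.
have Tm : widen_ord (leqnSn n) T != ord_max by rewrite -val_eqE /= neq_ltn ltn_ord.
have TL : widen_ord (leqnSn n) T = lift ord_max T by apply: val_inj; rewrite /= /bump leqNgt ltn_ord.
have L : forall z : 'I_n, (lift ord_max z == ord_max :> 'I_n.+1) = false.
  by move=> z; apply/negbTE; rewrite eq_sym neq_lift.
have LL : forall z w : 'I_n, (lift ord_max z == lift ord_max w :> 'I_n.+1) = (z == w).
  by move=> z w; apply: inj_eq; exact: lift_inj.
rewrite TL in Tm *.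
case: (unliftP ord_max x) => [x'|] ->; case: (unliftP ord_max y) => [y'|] -> /=;
  rewrite ?gc ?L ?LL ?eqxx ?(eq_sym ord_max) ?L ?(negbTE Tm) /=.
all: try by rewrite ?andbF ?andbT ?orbF ?orbT ?orTb ?andTb ?andFb ?orFb.
Qed.

Lemma del_add n (g : rel 'I_n) i k : ~~ g i k -> ~~ g k i ->
  delE (addE g i k) i k = g /\ delE (addE g i k) k i = g.
Proof.
move=> n1 n2; split; apply: functional_extensionality => x;
  apply: functional_extensionality => y; rewrite /delE /addE /=.
all: case e1: ((x == i) && (y == k));
  [ case/andP: e1 => /eqP xi /eqP yk; subst x y; rewrite (negbTE n1) ?eqxx;
    by case: (i == k); case: (k == i) | ].
all: case e2: ((x == k) && (y == i));
  [ case/andP: e2 => /eqP xi /eqP yk; subst x y; rewrite (negbTE n2) ?eqxx;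
    by case: (i == k); case: (k == i) | ].
all: by rewrite ?orbF ?andbT.
Qed.

Lemma stable_full (R : realFieldType) (b : nat -> R) c gamma
  (hb_pos : forall i : nat, (0 < i)%N -> 0 < b i)
  (hb_dec : forall i : nat, (0 < i)%N -> b i.+1 < b i)
  (hg0 : 0 <= gamma) (hg1 : gamma < 1) (hc : c < b 1%N - b 2%N)
  n S (g : rel 'I_n.+1) : famS S g -> pairwise_stable b c gamma g ->
  forall x y, g x y = (x != y).
Proof.
move=> fg [_ st].
have allS : forall y, y != ord_max -> S y.
  move=> y ym; apply/negPn/negP => nS.
  have ym' : (y == ord_max :> 'I_n.+1) = false by exact/negbTE.
  have n1 : ~~ g ord_max y by rewrite fg eqxx (negbTE nS) ym' /= ?andbF ?orbF.
  have n2 : ~~ g y ord_max by rewrite fg eqxx (negbTE nS) ym' /= ?andbF ?orbF.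
  have [d1 d2] := del_add n1 n2.
  have h1 : addE g ord_max y ord_max y by rewrite /addE /= !eqxx orbT.
  have h2 : addE g ord_max y y ord_max by rewrite /addE /= !eqxx orbT.
  have u1 := util_del hb_pos hb_dec hg0 hg1 hc h1; rewrite d1 in u1.
  have u2 := util_del hb_pos hb_dec hg0 hg1 hc h2; rewrite d2 in u2.
  have := st ord_max y; rewrite eq_sym ym => /(_ isT n1 u1) u3.
  by move: (lt_trans u2 u3); rewrite ltxx.
move=> x y; rewrite fg; case: (eqVneq x y) => //= xy.
case: (eqVneq x ord_max) => [xe|xm]; case: (eqVneq y ord_max) => [ye|ym] //=.
- by move: xy; rewrite xe ye eqxx.
- by rewrite allS ?orbT.
- by rewrite allS ?orbT.
Qed.

Lemma run_fam (R : realFieldType) (b : nat -> R) c gamma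
  (hb_pos : forall i : nat, (0 < i)%N -> 0 < b i)
  (hb_dec : forall i : nat, (0 < i)%N -> b i.+1 < b i)
  (hg0 : 0 <= gamma) (hg1 : gamma < 1) (hc : c < b 1%N - b 2%N)
  n (g h : rel 'I_n.+1) : run b c gamma g h -> forall S, famS S g ->
  forall x y, h x y = (x != y).
Proof.
elim=> {g h} [g st|g h g' _ [i [opt lt _]] _ IH] S fg.
  exact: stable_full st.
case: opt => [[k [ki ngik _ eh]]|[k [gik eh]]]; subst h.
  by apply: IH; apply: fam_add.
have := util_del hb_pos hb_dec hg0 hg1 hc gik.
by move/(lt_trans lt); rewrite ltxx.
Qed.

Theorem theorem2 (R : realFieldType) (b : nat -> R) (c gamma c0 : R)
  (hb_pos : forall i : nat, (0 < i)%N -> 0 < b i)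
  (hb_dec : forall i : nat, (0 < i)%N -> b i.+1 < b i)
  (hg0 : 0 <= gamma) (hg1 : gamma < 1)
  (hc : c < b 1%N - b 2%N) (hc0 : c0 <= (1 - gamma) * b 2%N) :
  forall (n : nat) (g : rel 'I_n), reached b c gamma c0 g ->
    forall x y : 'I_n, g x y = (x != y).
Proof.
move=> n g H; elim: H => [|m g0 T h _ IH _ hrun] x y.
  by rewrite (ord_small x y) ?eqxx.
exact: (run_fam hb_pos hb_dec hg0 hg1 hc hrun (fam_entered T IH)).
Qed.
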